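(* Let $A$ be a finite alphabet, $n\ge1$, and $L\subseteq(A^\ast)^n$ a regular $n$-variable language. There is a positive integer $p$ such that for every $(w_1,\ldots,w_n)\in L$ with $N:=\max_i|w_i|\ge p$ the following holds. Let $w_i^\$=w_i\$^{N-|w_i|}$ (so each $w_i^\$$ has length $N$). Then there are integers $k\ge1$ and $l\ge 0$ with $k+l\le N$ such that, writing each $w_i^\$=u_im_iv_i$ where $m_i$ consists of the $k$-th through $(k+l)$-th letters of $w_i^\$$, for all $r\ge1$ the tuple $(u_1m_1^rv_1,\ldots,u_nm_n^rv_n)$, read as a word over the padded alphabet, lies in $L^\$$ (i.e. deleting the $\$$ symbols yields an element of $L$). Moreover, each $m_i$ consists either entirely of letters of $A$ or entirely of $\$$ symbols.
   Context: $A^\ast$ is the set of finite words over $A$, $\$$ a new padding symbol, $A^\$=(A\sqcup\{\$\})^n\setminus\{(\$,\ldots,\$)\}$ the padded alphabet. For $(w_1,\ldots,w_n)\in(A^\ast)^n$ with $N=\max|w_i|$, its padded string is the word $\overline\sigma_1\cdots\overline\sigma_N$ over $A^\$$ where $\overline\sigma_j$ is the $n$-tuple of $j$-th letters of the $w_i$, using $\$$ when $j>|w_i|$. $L^\$$ is the set of padded strings of elements of $L$. $L$ is regular ($n$-tape regular) if $L^\$$ is accepted by a deterministic finite state automaton over $A^\$$. *)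

(* Defs.v *)
From mathcomp Require Import all_boot.
Set Implicit Arguments. Unset Strict Implicit. Unset Printing Implicit Defensive.

(* Letters of the padded alphabet for n tapes: n-tuples over A ⊔ {$},
   where [None] stands for the padding symbol $. *)
Definition padlet (A : finType) (n : nat) := {ffun 'I_n -> option A}.

Definition is_padlet (A : finType) (n : nat) (c : padlet A n) : bool :=
  [exists i, c i != None].

Record dfa (S : finType) := DFA {
  dstate : finType;
  dstart : dstate;
  dfinal : pred dstate;
  dtrans : dstate -> S -> dstate }.

Definition accepts (S : finType) (D : dfa S) (s : seq S) : bool :=
  @dfinal S D (foldl (@dtrans S D) (@dstart S D) s).

Definition cols (A : finType) (n : nat) (x : 'I_n -> seq (option A))
  : seq (padlet A n) :=
  mkseq (fun j => [ffun i => nth None (x i) j]) (\max_(i < n) size (x i)).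

Definition maxlen (A : finType) (n : nat) (w : 'I_n -> seq A) : nat :=
  \max_(i < n) size (w i).

Definition padw (A : finType) (n : nat) (w : 'I_n -> seq A) (i : 'I_n)
  : seq (option A) :=
  map Some (w i) ++ nseq (maxlen w - size (w i)) None.

Definition padded (A : finType) (n : nat) (w : 'I_n -> seq A) : seq (padlet A n) :=
  cols (padw w).

Definition in_Lpad (A : finType) (n : nat) (L : ('I_n -> seq A) -> Prop)
  (s : seq (padlet A n)) : Prop :=
  exists w, L w /\ padded w = s.

(* L is regular: L^$ is the language (over A^$) of a DFA over A^$.  The DFA
   is given over all of (A ⊔ {$})^n, and only its behaviour on words over
   A^$ matters. *)
Definition regular (A : finType) (n : nat) (L : ('I_n -> seq A) -> Prop) : Prop :=
  exists D : dfa (padlet A n),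
    forall s : seq (padlet A n), all (@is_padlet A n) s ->
      (accepts D s <-> in_Lpad L s).

(* Decomposition of a word at 1-indexed positions k .. k+l. *)
Definition pre (T : Type) (k : nat) (s : seq T) := take k.-1 s.
Definition mid (T : Type) (k l : nat) (s : seq T) := take l.+1 (drop k.-1 s).
Definition post (T : Type) (k l : nat) (s : seq T) := drop (k + l) s.
Definition pump (T : Type) (k l r : nat) (s : seq T) :=
  pre k s ++ flatten (nseq r (mid k l s)) ++ post k l s.

(* Main.v *)
Require Import Defs.
From mathcomp Require Import all_boot zify.
Set Implicit Arguments. Unset Strict Implicit. Unset Printing Implicit Defensive.

Section H.
Variables (A : finType) (n : nat).
Hypothesis n0 : 0 < n.

Lemma cols_unif (x : 'I_n -> seq (option A)) m :
  (forall i, size (x i) = m) ->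
  cols x = mkseq (fun j => [ffun i => nth None (x i) j]) m.
Proof.
move=> hs; rewrite /cols (eq_bigr (fun _ => m)) => [|i _]; last exact: hs.
rewrite big_const_ord; congr mkseq.
case: n n0 => // k _ /=; elim: k => [|k IH] /=; first by rewrite maxn0.
by rewrite IH maxnn.
Qed.

Lemma size_cols (x : 'I_n -> seq (option A)) m :
  (forall i, size (x i) = m) -> size (cols x) = m.
Proof. by move=> hs; rewrite (cols_unif hs) size_mkseq. Qed.

Lemma cols_cat (x y : 'I_n -> seq (option A)) m1 m2 :
  (forall i, size (x i) = m1) -> (forall i, size (y i) = m2) ->
  cols (fun i => x i ++ y i) = cols x ++ cols y.
Proof.
move=> hx hy.
rewrite (cols_unif (m:=m1+m2)); last by move=> i; rewrite size_cat hx hy.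
rewrite (cols_unif hx) (cols_unif hy) /mkseq iotaD map_cat add0n.
congr (_ ++ _).
  apply/eq_in_map => j; rewrite mem_iota add0n => /andP[_ hj].
  by apply/ffunP => i; rewrite !ffunE nth_cat hx hj.
rewrite -{1}(addn0 m1) iotaDl -map_comp; apply/eq_map => j /=.
by apply/ffunP => i; rewrite !ffunE nth_cat hx ltnNge leq_addr /= addKn.
Qed.

Lemma size_flat_nseq (T : Type) r (s : seq T) : size (flatten (nseq r s)) = r * size s.
Proof. by elim: r => //= r IH; rewrite size_cat IH mulSn. Qed.

Lemma cols_flat (y : 'I_n -> seq (option A)) m r :
  (forall i, size (y i) = m) ->
  cols (fun i => flatten (nseq r (y i))) = flatten (nseq r (cols y)).
Proof.
move=> hy; elim: r => [|r IH].
  by rewrite (cols_unif (m:=0)).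
transitivity (cols (fun i => y i ++ flatten (nseq r (y i)))) => //.
rewrite (cols_cat (m1:=m) (m2:=r*m)) //= ?IH // => i.
by rewrite size_flat_nseq hy.
Qed.
Lemma eq_cols (x y : 'I_n -> seq (option A)) :
  (forall i, x i = y i) -> cols x = cols y.
Proof.
move=> e; rewrite /cols (eq_bigr (fun i => size (y i))) => [|i _]; last by rewrite e.
by apply: eq_mkseq => j; apply/ffunP => i; rewrite !ffunE e.
Qed.
End H.

Theorem mainTheorem8 (A : finType) (n : nat) (L : ('I_n -> seq A) -> Prop) :
  0 < n -> regular L ->
  exists p : nat, 0 < p /\
    forall w : 'I_n -> seq A, L w -> p <= maxlen w ->
      exists k l : nat,
        [/\ 1 <= k, k + l <= maxlen w,
            (forall i : 'I_n,
               all (fun c => c != None) (mid k l (padw w i)) \/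
               all (fun c => c == None) (mid k l (padw w i)))
          & forall r : nat, 1 <= r ->
              in_Lpad L (cols (fun i => pump k l r (padw w i)))].
Proof.
move=> n0 [D HD].
set Q := #|dstate D|.
have Q0 : 0 < Q by apply/card_gt0P; exists (dstart D).
exists (n.+1 * Q); split; first by rewrite muln_gt0.
move=> w Lw hp.
set N := maxlen w.
have szw i : size (w i) <= N by exact: (leq_bigmax (F := fun i => size (w i)) i).
have szp i : size (padw w i) = N.
  by rewrite /padw size_cat size_map size_nseq subnKC.
have [c [hc hcut]] : exists c, c + Q <= N /\
    forall i, ~~ ((c < size (w i)) && (size (w i) < c + Q)).
  case: (boolP [exists j : 'I_n.+1, [forall i : 'I_n,
      ~~ ((j * Q < size (w i)) && (size (w i) < j * Q + Q))]]).
    move/existsP => [j /forallP H]; exists (j * Q); split => //.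
    have := ltn_ord j; move: hp; rewrite /N; nia.
  rewrite negb_exists => /forallP H; exfalso.
  have H' : forall j : 'I_n.+1, exists i : 'I_n,
      (j * Q < size (w i)) && (size (w i) < j * Q + Q).
    by move=> j; have := H j; rewrite negb_forall => /existsP [i]; rewrite negbK; exists i.
  have [g Hg] := fin_all_exists H'.
  have ginj : injective g.
    move=> j1 j2 e; have := Hg j1; have := Hg j2; rewrite e.
    move=> /andP[a1 b1] /andP[a2 b2]; apply: ord_inj.
    case: (ltngtP j1 j2) => // h; nia.
  by have := leq_card _ ginj; rewrite !card_ord ltnn.
set s := padded w.
set st := fun t => foldl (@dtrans _ D) (dstart D) (take t s).
have [a [b [hab hca hbc heq]]] : exists a b,
    [/\ a < b, c <= a, b <= c + Q & st a = st b].
  case: (boolP [exists t1 : 'I_Q.+1, exists t2 : 'I_Q.+1,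
      (t1 < t2) && (st (c + t1) == st (c + t2))]).
    move/existsP => [t1 /existsP [t2 /andP[lt /eqP e]]].
    exists (c + t1), (c + t2); split => //.
    - by rewrite ltn_add2l.
    - exact: leq_addr.
    - by rewrite leq_add2l -ltnS ltn_ord.
  rewrite negb_exists => /forallP H; exfalso.
  pose f := fun t : 'I_Q.+1 => st (c + t).
  have finj : injective f.
    move=> t1 t2 e; apply: ord_inj; case: (ltngtP t1 t2) => // h.
      by have := H t1; rewrite negb_exists => /forallP/(_ t2); rewrite h; move: e; rewrite /f => ->; rewrite eqxx.
    by have := H t2; rewrite negb_exists => /forallP/(_ t1); rewrite h; move: e; rewrite /f => ->; rewrite eqxx.
  by have := leq_card _ finj; rewrite card_ord ltnn.
have hbN : b <= N by apply: leq_trans hbc hc.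
exists a.+1, (b - a.+1).
have hkl : a.+1 + (b - a.+1) = b by rewrite subnKC.
have hmid i : mid a.+1 (b - a.+1) (padw w i) = take (b - a) (drop a (padw w i)).
  by rewrite /mid subnSK.
split => //.
- by rewrite hkl.
- move=> i; rewrite hmid; have := hcut i.
  case: (leqP (size (w i)) a) => ha.
    move=> _; right.
    have -> : drop a (padw w i) = drop (a - size (w i)) (nseq (N - size (w i)) None).
      by rewrite -[in LHS](subnK ha) -drop_drop /padw drop_size_cat ?size_map.
    by apply/allP => x /mem_take /mem_drop; rewrite mem_nseq => /andP[].
  move=> hc'; have hb : b <= size (w i).
    move: hc'; rewrite (leq_ltn_trans hca ha) /= -leqNgt => h; exact: leq_trans hbc h.
  left; rewrite take_drop subnK ?(ltnW hab) // /padw takel_cat ?size_map //.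
  by rewrite -map_take -map_drop all_map; apply/allP.
move=> r hr.
pose X := fun i => take a (padw w i).
pose Y := fun i => take (b - a) (drop a (padw w i)).
pose Z := fun i => drop b (padw w i).
have sX i : size (X i) = a by rewrite size_takel // szp (leq_trans (ltnW hab) hbN).
have sY i : size (Y i) = b - a by rewrite size_takel // size_drop szp leq_sub2r.
have sZ i : size (Z i) = N - b by rewrite size_drop szp.
have hs : s = cols X ++ (cols Y ++ cols Z).
  rewrite -(cols_cat n0 sY sZ) -(cols_cat n0 (m2:=b - a + (N - b)) sX); last first.
    by move=> i; rewrite size_cat sY sZ.
  rewrite /s /padded; apply: eq_cols => i; rewrite /X /Y /Z.
  have e : drop b (padw w i) = drop (b - a) (drop a (padw w i)).
    by rewrite drop_drop subnK // ltnW.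
  by rewrite e !cat_take_drop.
have hall : all (@is_padlet A n) s.
  rewrite /s /padded (cols_unif n0 szp); apply/allP => x /mapP [j].
  rewrite mem_iota add0n => /andP[_ hj] ->; rewrite /is_padlet.
  case: (boolP [exists i, j < size (w i)]) => [/existsP[i hi] | ].
    apply/existsP; exists i; rewrite ffunE /padw nth_cat size_map hi.
    have hm : nth None (map Some (w i)) j \in map Some (w i).
      by apply: mem_nth; rewrite size_map.
    by case/mapP: hm => y _ ->.
  rewrite negb_exists => /forallP H; exfalso.
  have : N <= j by apply/bigmax_leqP => i _; rewrite leqNgt H.
  by rewrite leqNgt hj.
have acc_s : accepts D s by apply/HD => //; exists w.
have hta : take a s = cols X by rewrite hs take_size_cat // (size_cols n0 sX).
have htb : take b s = cols X ++ cols Y.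
  by rewrite hs catA take_size_cat // size_cat (size_cols n0 sX) (size_cols n0 sY) subnKC // ltnW.
rewrite (eq_cols (y := fun i => X i ++ (flatten (nseq r (Y i)) ++ Z i))); last first.
  by move=> i; rewrite /pump /pre /mid /post hkl subnSK.
rewrite (cols_cat n0 sX (m2 := r * (b - a) + (N - b))); last first.
  by move=> i; rewrite size_cat size_flat_nseq sY sZ.
rewrite (cols_cat n0 (m1 := r * (b - a)) (m2 := N - b)) //; last first.
  by move=> i; rewrite size_flat_nseq sY.
rewrite (cols_flat n0 r sY).
move: hall acc_s; rewrite hs => hall acc_s.
apply/HD.
  move: hall; rewrite !all_cat => /and3P[h1 h2 h3]; rewrite h1 h3 andbT /=.
  by elim: (r) => //= r' IH; rewrite all_cat h2 IH.
move: acc_s; rewrite /accepts !foldl_cat.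
have hq : foldl (@dtrans _ D) (foldl (@dtrans _ D) (dstart D) (cols X)) (cols Y)
          = foldl (@dtrans _ D) (dstart D) (cols X).
  by rewrite -foldl_cat -htb -hta.
set q := foldl _ (dstart D) (cols X).
have -> : foldl (@dtrans _ D) q (flatten (nseq r (cols Y))) = q.
  by elim: (r) => //= r' IH; rewrite foldl_cat hq IH.
by rewrite hq.
Qed.
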